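(* For every $m\ge0$ and $t,\theta\in\mathbb N_0$ with $t\le\theta$, almost surely $$\sigma(t;m)>\theta\iff V(s;m)>m\ \text{for all } s=t,\dots,\theta\iff m<\underline M(t,\theta).$$
   Context: $(\Omega,\mathcal F,\mathbb P)$ complete with filtration $\{\mathcal F(t)\}_{t\in\mathbb N_0}$; $\beta\in(0,1)$; $\{h(t)\}_{t\in\mathbb N}$ positive, predictable ($h(t)$ is $\mathcal F(t-1)$-measurable), with $\mathbb E[\sum_{t\ge0}\beta^th(t+1)]<\infty$. $\mathcal S(t)$: stopping times with values in $\{t,t+1,\dots\}\cup\{\infty\}$; $\beta^\infty:=0$. For $m\ge0$: $V(t;m):=\operatorname{ess\,sup}_{\tau\in\mathcal S(t)}\mathbb E[\sum_{u=t}^{\tau-1}\beta^{u-t}h(u+1)+m\beta^{\tau-t}\mid\mathcal F(t)]$ (a.s. continuous in $m$, so it may be evaluated at random $m$); $\sigma(t;m):=\inf\{\theta\ge t:V(\theta;m)=m\}$ ($\inf\emptyset=\infty$). Gittins index $M(t):=\operatorname{ess\,sup}\{X>0\ \mathcal F(t)\text{-measurable}:V(t;X)\ge X\}$; $\underline M(t,\theta):=\min_{t\le u\le\theta}M(u)$. *)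

(* Defs.v *)
From HB Require Import structures.
From mathcomp Require Import all_boot all_order all_algebra.
From mathcomp Require Import all_classical all_reals all_analysis.
From mathcomp Require Import measurable_realfun.
Set Implicit Arguments. Unset Strict Implicit. Unset Printing Implicit Defensive.
Import Order.TTheory GRing.Theory Num.Theory.
Import numFieldNormedType.Exports.
Local Open Scope classical_set_scope.
Local Open Scope ring_scope.

Section Defs.
Context {d : measure_display} {T : measurableType d} {R : realType}.

Definition meas_wrt {d'} {U : measurableType d'} (G : set (set T)) (f : T -> U) :=
  forall B : set U, measurable B -> G (f @^-1` B).

Definition filtration (F : nat -> set (set T)) :=
  (forall n, sigma_algebra setT (F n)) /\
  (forall n A, F n A -> measurable A) /\
  (forall n A, F n A -> F n.+1 A).

(* stopping time with values in {t, t+1, ...} \cup {oo}; None encodes oo *)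
Definition stopping_time_from (F : nat -> set (set T)) (t : nat)
    (tau : T -> option nat) :=
  (forall x n, tau x = Some n -> (t <= n)%N) /\
  (forall n, F n [set x | exists k, tau x = Some k /\ (k <= n)%N]).

(* \sum_{u=t}^{tau-1} beta^{u-t} h(u+1) + m beta^{tau-t}, with beta^oo = 0 *)
Definition payoff (beta : R) (h : nat -> T -> R) (t : nat) (m : R)
    (tau : T -> option nat) (x : T) : \bar R :=
  match tau x with
  | Some n => ((\sum_(t <= u < n) beta ^+ (u - t) * h u.+1 x)
               + m * beta ^+ (n - t))%:E
  | None => (\sum_(t <= u <oo) (beta ^+ (u - t) * h u.+1 x)%:E)%E
  end.

Definition cond_exp_version (P : probability T R) (G : set (set T))
    (X : T -> \bar R) (Y : T -> R) :=
  [/\ meas_wrt G Y, P.-integrable setT X, P.-integrable setT (EFin \o Y) &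
      forall A, G A -> (\int[P]_(x in A) (Y x)%:E = \int[P]_(x in A) X x)%E].

Definition is_ess_sup (P : probability T R) (G : set (set T))
    (S : set (T -> \bar R)) (Y : T -> \bar R) :=
  [/\ meas_wrt G Y,
      (forall X, S X -> {ae P, forall x, (X x <= Y x)%E}) &
      (forall Z : T -> \bar R, measurable_fun setT Z ->
         (forall X, S X -> {ae P, forall x, (X x <= Z x)%E}) ->
         {ae P, forall x, (Y x <= Z x)%E})].

Definition is_value_fun (P : probability T R) (F : nat -> set (set T))
    (beta : R) (h : nat -> T -> R) (V : nat -> R -> T -> R) :=
  forall t m, 0 <= m ->
    is_ess_sup P (F t)
      [set Y | exists tau Z, stopping_time_from F t tau /\
               cond_exp_version P (F t) (payoff beta h t m tau) Z /\
               Y = EFin \o Z]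
      (EFin \o V t m).

(* sigma(t;m) = inf {theta >= t : V(theta;m) = m}, inf of empty set = +oo *)
Definition sigma_time (V : nat -> R -> T -> R) (t : nat) (m : R) (x : T)
    : \bar R :=
  ereal_inf [set ((n%:R : R)%:E) | n in [set n | (t <= n)%N /\ V n m x = m]].

Definition is_gittins_index (P : probability T R) (F : nat -> set (set T))
    (V : nat -> R -> T -> R) (M : nat -> T -> \bar R) :=
  forall t,
    is_ess_sup P (F t)
      [set Y | exists X : T -> R, [/\ meas_wrt (F t) X, (forall x, 0 < X x),
               {ae P, forall x, X x < V t (X x) x} & Y = EFin \o X]]
      (M t).

Definition Mmin (M : nat -> T -> \bar R) (t theta : nat) (x : T) : \bar R :=
  \big[Order.min/+oo%E]_(t <= u < theta.+1) M u x.

End Defs.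

(* Main.v *)
Require Import Defs.
From HB Require Import structures.
From mathcomp Require Import all_boot all_order all_algebra.
From mathcomp Require Import all_classical all_reals all_analysis.
From mathcomp Require Import measurable_realfun.
Import Order.TTheory GRing.Theory Num.Theory.
Import numFieldNormedType.Exports.
Local Open Scope classical_set_scope.
Local Open Scope ring_scope.

From mathcomp Require Import lra ring.

Section GType.
Context {d : measure_display} {T : measurableType d} {R : realType}.
Variable (P : probability T R) (G : set (set T)).
Hypothesis sG : sigma_algebra setT G.
Hypothesis Gm : forall A, G A -> measurable A.

Definition GT := g_sigma_algebraType G.
Definition idG : T -> GT := id.

Lemma GTmeasE : (measurable : set (set GT)) = G.
Proof. exact: measurable_g_measurableTypeE. Qed.

Lemma meas_wrtP (f : T -> R) :
  meas_wrt G f <-> measurable_fun setT (f : GT -> R).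
Proof.
split => [mf _ B mB|mf B mB].
  by rewrite setTI GTmeasE; exact: mf.
by have := mf measurableT B mB; rewrite setTI GTmeasE.
Qed.

Lemma idG_meas : measurable_fun setT idG.
Proof.
move=> _ A; rewrite GTmeasE setTI => GA; exact: Gm.
Qed.

Definition PG : set GT -> \bar R := fun A => P A.

Let PG0 : PG set0 = 0%E. Proof. exact: measure0. Qed.
Let PG_ge0 A : (0 <= PG A)%E.
Proof. exact: measure_ge0. Qed.
Let PG_sa : semi_sigma_additive PG.
Proof.
move=> F mF tF mUF; apply: (@measure_semi_sigma_additive _ _ _ P) => //.
- by move=> n; apply: Gm; rewrite -GTmeasE.
- by apply: Gm; rewrite -GTmeasE.
Qed.
HB.instance Definition _ := isMeasure.Build _ _ _ PG PG0 PG_ge0 PG_sa.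
Let PG_T : PG setT = 1%E. Proof. exact: probability_setT. Qed.
HB.instance Definition _ := Measure_isProbability.Build _ _ _ PG PG_T.

Lemma PG_check : {sigma_finite_measure set GT -> \bar R}.
Proof. exact: PG. Qed.


Section CondExp.
Variable X : T -> \bar R.
Hypothesis intX : P.-integrable setT X.

Definition nuG : set GT -> \bar R := fun A => induced_charge intX A.

Let nuG0 : nuG set0 = 0%E. Proof. exact: charge0. Qed.
Let nuG_fin A : measurable A -> nuG A \is a fin_num.
Proof. by rewrite GTmeasE => GA; apply: fin_num_measure; exact: Gm. Qed.
Let nuG_sa : semi_sigma_additive nuG.
Proof.
move=> F mF tF mUF; apply: (@charge_semi_sigma_additive _ _ _ (induced_charge intX)) => //.
- by move=> n; apply: Gm; rewrite -GTmeasE.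
- by apply: Gm; rewrite -GTmeasE.
Qed.
HB.instance Definition _ := isCharge.Build _ _ _ nuG nuG0 nuG_fin nuG_sa.

Lemma nuG_dom : nuG `<< PG.
Proof.
move=> N N0 A mA AN; rewrite /nuG /induced_charge.
have mA' : measurable (A : set T) by apply: Gm; rewrite -GTmeasE.
apply: null_set_integral => //.
  exact: measurable_funTS (measurable_int _ intX).
exact: N0.
Qed.

Definition RN := Radon_Nikodym nuG PG.

Lemma RN_int_T : P.-integrable setT (RN \o idG).
Proof.
have iRN : PG.-integrable setT RN := Radon_Nikodym_integrable nuG_dom.
apply/integrableP; split.
  exact: measurableT_comp (measurable_int _ iRN) idG_meas.
have := (integrableP _ _ _ iRN).2.
have -> : (\int[PG]_x `|RN x| = \int[pushforward P idG]_x `|RN x|)%E by [].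
rewrite ge0_integral_pushforward //.
- exact: idG_meas.
- exact: measurableT_comp (measurable_int _ iRN).
Qed.

Lemma condexp_exists : exists Y : T -> R, cond_exp_version P G X Y.
Proof.
have iRN : PG.-integrable setT RN := Radon_Nikodym_integrable nuG_dom.
have mRN : measurable_fun setT RN := measurable_int _ iRN.
have EY : EFin \o (fun x => fine (RN x)) = RN \o idG.
  by apply/funext => x /=; rewrite fineK // Radon_Nikodym_fin_num //; exact: nuG_dom.
exists (fun x => fine (RN x)); split => //.
- apply/meas_wrtP; exact: measurableT_comp (fine_measurable measurableT) mRN.
- rewrite EY; exact: RN_int_T.
- move=> A GA.
  have mA : measurable (A : set GT) by rewrite GTmeasE.
  transitivity (\int[P]_(x in A) (RN \o idG) x)%E.
    by apply: eq_integral => x _; rewrite /= fineK // Radon_Nikodym_fin_num //; exact: nuG_dom.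
  rewrite -(@integral_pushforward _ _ _ _ R idG idG_meas P A RN mRN) //; last first.
    by apply: (integrableS measurableT _ (subsetT _) RN_int_T); exact: Gm.
  have -> : (\int[pushforward P idG]_(x in A) RN x = \int[PG]_(x in A) RN x)%E by [].
  by rewrite -Radon_Nikodym_integral //; exact: nuG_dom.
Qed.

End CondExp.
Lemma condexp_le (Y1 Y2 : T -> R) : meas_wrt G Y1 -> meas_wrt G Y2 ->
  P.-integrable setT (EFin \o Y1) -> P.-integrable setT (EFin \o Y2) ->
  (forall A, G A -> (\int[P]_(x in A) (Y1 x)%:E <= \int[P]_(x in A) (Y2 x)%:E)%E) ->
  {ae P, forall x, Y1 x <= Y2 x}.
Proof.
move=> /meas_wrtP m1 /meas_wrtP m2 i1 i2 H.
pose A0 := [set x : T | Y2 x < Y1 x].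
have GA0 : G A0.
  have mD : measurable_fun setT ((fun x => Y1 x - Y2 x) : GT -> R).
    exact: measurable_funB.
  have : G ((fun x => Y1 x - Y2 x) @^-1` `]0, +oo[%classic).
    rewrite -GTmeasE -[X in measurable X]setTI.
    exact: (mD measurableT _ (measurable_itv _)).
  congr G; apply/seteqP; split => x /=; rewrite in_itv /= andbT subr_gt0 //.
have mA0 : measurable A0 by exact: Gm.
pose f := fun x => ((Y1 x - Y2 x))%:E.
have iA1 : P.-integrable A0 (EFin \o Y1) by exact: integrableS i1.
have iA2 : P.-integrable A0 (EFin \o Y2) by exact: integrableS i2.
have mf : measurable_fun A0 f.
  apply/measurable_EFinP; apply: measurable_funB.
  - by have := measurable_int _ iA1 => /measurable_EFinP.
  - by have := measurable_int _ iA2 => /measurable_EFinP.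
have f_le0 : (\int[P]_(x in A0) f x <= 0)%E.
  rewrite /f; under eq_integral do rewrite EFinB.
  rewrite integralB //; rewrite sube_le0; exact: H.
have f_ge0 : (0 <= \int[P]_(x in A0) f x)%E.
  apply: integral_ge0 => x; rewrite /A0 /f /= lee_fin subr_ge0 => /ltW //.
have : (\int[P]_(x in A0) `|f x| = 0)%E.
  transitivity (\int[P]_(x in A0) f x)%E; last by apply/eqP; rewrite eq_le f_le0 f_ge0.
  apply: eq_integral => x; rewrite inE => hx.
  by rewrite gee0_abs // /f lee_fin subr_ge0 ltW.
move/(ae_eq_integral_abs _ mA0 mf).
apply: filterS => x /= h; rewrite leNgt; apply/negP => hx.
have := h hx; rewrite /f => -[]; apply/eqP; rewrite subr_eq0 gt_eqF //.
Qed.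

End GType.



Lemma L_near (R : realType) (f : R -> R) (y e : R) :
  {within [set m : R | 0 <= m], continuous f} -> 0 <= y -> 0 < e ->
  exists2 d : R, 0 < d & forall z, 0 <= z -> `|y - z| < d -> `|f y - f z| < e.
Proof.
move=> cf y0 e0.
have := (subspace_continuousP _ _).1 cf y y0.
move/cvgrPdist_lt/(_ e e0).
rewrite near_withinE => /nbhs_ballP[d /= d0 hd].
exists d => // z z0 yz; by apply: (hd z) => //; rewrite -ball_normE.

Qed.

Lemma L_up (R : realType) (f : R -> R) (y : R) :
  {within [set m : R | 0 <= m], continuous f} -> 0 <= y -> y < f y ->
  exists r : rat, y < ratr r /\ ratr r < f (ratr r).
Proof.
move=> cf y0 yf.
have e0 : 0 < (f y - y) / 2 by rewrite divr_gt0 // subr_gt0.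
have [d d0 hd] := L_near _ _ _ _ cf y0 e0.
have : y < y + Num.min d ((f y - y) / 2) by rewrite ltrDl lt_min d0 e0.
move=> /rat_in_itvoo[r]; rewrite in_itv /= => /andP[yr ry].
exists r; split => //.
have r0 : 0 <= ratr r :> R by rewrite (le_trans y0) // ltW.
have md : Num.min d ((f y - y) / 2) <= d by rewrite ge_min lexx.
have me : Num.min d ((f y - y) / 2) <= (f y - y) / 2 by rewrite ge_min lexx orbT.
have yrd : `|y - ratr r| < d.
  rewrite ler0_norm; [lra | by rewrite subr_le0 ltW].
have H := hd _ r0 yrd.
have H2 := le_lt_trans (ler_norm _) H.
lra.
Qed.

Lemma L_dn (R : realType) (f : R -> R) (y a b : R) :
  {within [set m : R | 0 <= m], continuous f} -> 0 <= y -> 0 <= b ->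
  f y < a + b * y ->
  exists r : rat, y < ratr r /\ f (ratr r) < a + b * ratr r.
Proof.
move=> cf y0 b0 yf.
have e0 : 0 < (a + b * y - f y) / 2 by rewrite divr_gt0 // subr_gt0.
have [d d0 hd] := L_near _ _ _ _ cf y0 e0.
have : y < y + d by rewrite ltrDl.
move=> /rat_in_itvoo[r]; rewrite in_itv /= => /andP[yr ry].
exists r; split => //.
have r0 : 0 <= ratr r :> R by rewrite (le_trans y0) // ltW.
have yrd : `|y - ratr r| < d.
  rewrite ler0_norm; [lra | by rewrite subr_le0 ltW].
have H := hd _ r0 yrd.
have H2 := le_lt_trans (ler_norm _) H.
have H3 : b * y <= b * ratr r by rewrite ler_wpM2l // ltW.
have H4 := le_lt_trans (ler_norm _) (eq_ind _ (fun u => u < _) H _ (distrC _ _)).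
lra.
Qed.

Lemma meas_constP d (T : measurableType d) (p : Prop) :
  measurable [set _ : T | p].
Proof.
case: (pselect p) => hp.
  by rewrite (_ : [set _ | p] = setT) //; apply/seteqP; split.
by rewrite (_ : [set _ | p] = set0) //; apply/seteqP; split.
Qed.

Lemma sigma_setT T (G : set (set T)) : sigma_algebra setT G -> G setT.
Proof. by case=> G0 GC _; have := GC set0 G0; rewrite setD0. Qed.

Lemma ae_mono d (T : measurableType d) (R : realType) (P : probability T R) (Q1 Q2 : T -> Prop) :
  (forall x, Q1 x -> Q2 x) -> {ae P, forall x, Q1 x} -> {ae P, forall x, Q2 x}.
Proof. move=> H; apply: filterS => x; exact: H. Qed.

Arguments ae_mono {d T R P Q1 Q2}.

Lemma ae_and d (T : measurableType d) (R : realType) (P : probability T R) (Q1 Q2 : T -> Prop) :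
  {ae P, forall x, Q1 x} -> {ae P, forall x, Q2 x} -> {ae P, forall x, Q1 x /\ Q2 x}.
Proof. by move=> H1 H2; apply: filterS2 H1 H2 => x. Qed.

Arguments ae_and {d T R P Q1 Q2}.

Lemma meas_opt d (T : measurableType d) (R : realType) (tau : T -> option nat)
  (g : option nat -> \bar R) :
  (forall n, measurable [set x | tau x = Some n]) ->
  measurable_fun setT (fun x => g (tau x)).
Proof.
move=> mt _ B mB; rewrite setTI.
have mN : measurable [set x | tau x = None].
  rewrite (_ : [set x | tau x = None] = ~` \bigcup_n [set x | tau x = Some n]).
    by apply: measurableC; exact: bigcup_measurable.
  apply/seteqP; split => x /=.
    by move=> hx [n _ /=]; rewrite hx.
  by case E: (tau x) => [n|] // H; exfalso; apply: H; exists n.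
rewrite (_ : _ @^-1` B = (\bigcup_n ([set x | tau x = Some n] `&` [set _ | B (g (Some n))]))
   `|` ([set x | tau x = None] `&` [set _ | B (g None)])).
  apply: measurableU; last by apply: measurableI => //; exact: meas_constP.
  by apply: bigcup_measurable => n _; apply: measurableI; [exact: mt | exact: meas_constP].
apply/seteqP; split => x /=.
  case E: (tau x) => [n|] Bx; [left; exists n => //| right] => //.
by case=> [[n _ /= [-> //]]|[-> //]].
Qed.

Lemma ae_impl d (T : measurableType d) (R : realType) (P : probability T R)
  (b : Prop) (Q : T -> Prop) :
  (b -> {ae P, forall x, Q x}) -> {ae P, forall x, b -> Q x}.
Proof.
move=> H; case: (pselect b) => hb.
  by apply: ae_mono (H hb) => x q _.
by apply: nearW => x /hb.
Qed.
Arguments ae_impl {d T R P b Q}.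

Lemma ae_rat d (T : measurableType d) (R : realType) (P : probability T R)
  (Q : rat -> T -> Prop) :
  (forall r, {ae P, forall x, Q r x}) -> {ae P, forall x, forall r, Q r x}.
Proof.
move=> H.
have : {ae P, forall x, forall n, (fun n x => match @unpickle rat n with
   Some r => Q r x | None => True end) n x}.
  apply: ae_foralln => n; case: (unpickle n) => [r|]; first exact: H.
  exact: nearW.
apply: filterS => x Hx r; have := Hx (pickle r); rewrite /= pickleK //.
Qed.
Arguments ae_rat {d T R P Q}.

Section Main.
Context {d : measure_display} {T : measurableType d} {R : realType}.
Variables (P : probability T R) (F : nat -> set (set T)) (beta : R)
  (h : nat -> T -> R) (V : nat -> R -> T -> R) (M : nat -> T -> \bar R).
Hypothesis hF : filtration F.
Hypothesis hb : 0 < beta < 1.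
Hypothesis hpos : forall n x, 0 < h n x.
Hypothesis hmeas : forall n, meas_wrt (F n) (h n.+1).
Hypothesis hint : (\int[P]_x (\sum_(0 <= u <oo) (beta ^+ u * h u.+1 x)%:E) < +oo)%E.
Hypothesis hV : is_value_fun P F beta h V.
Hypothesis hcont : forall t, {ae P, forall x,
     {within [set m : R | 0 <= m], continuous (fun m => V t m x)}}.
Hypothesis hM : is_gittins_index P F V M.

Let sF s : sigma_algebra setT (F s). Proof. exact: hF.1. Qed.
Let Fm s A : F s A -> measurable A. Proof. exact: hF.2.1. Qed.

Lemma st_const t k : (t <= k)%N -> stopping_time_from F t (fun _ => Some k).
Proof.
move=> tk; split; first by move=> x n [<-].
move=> n; case: (leqP k n) => kn.
  rewrite (_ : [set _ | _] = setT); first exact: sigma_setT.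
  by apply/seteqP; split => // x _; exists k.
rewrite (_ : [set _ | _] = set0); first by case: (sF n).
apply/seteqP; split => // x [k' [[<-]]]; by rewrite leqNgt kn.
Qed.

Lemma meas_wrt_cst s (c : R) : meas_wrt (F s) (fun _ : T => c).
Proof. apply/(meas_wrtP (F s) (sF s)); exact: measurable_cst. Qed.

Lemma meas_wrt_T s (f : T -> R) : meas_wrt (F s) f -> measurable_fun setT f.
Proof. by move=> mf _ B mB; rewrite setTI; apply: Fm; exact: mf. Qed.

Lemma meas_wrt_EFin s (f : T -> R) : meas_wrt (F s) (EFin \o f) -> meas_wrt (F s) f.
Proof.
move=> mf B mB; have := mf (EFin @` B) (measurable_image_EFin mB).
congr (F s); apply/seteqP; split => x /=; first by move=> [y By [<-]].
by move=> Bx; exists (f x).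
Qed.

Lemma V_measT s c : 0 <= c -> meas_wrt (F s) (V s c).
Proof. by move=> c0; have [mV _ _] := hV s c c0; exact: meas_wrt_EFin. Qed.

Lemma V_ge s c : 0 <= c -> {ae P, forall x, c <= V s c x}.
Proof.
move=> c0; have [_ H _] := hV s c c0.
have pE : payoff beta h s c (fun _ => Some s) = EFin \o (fun _ => c).
  by apply/funext => x; rewrite /payoff big_geq // subnn expr0 mulr1 add0r.
have := H (EFin \o (fun _ => c)).
case.
  exists (fun _ => Some s), (fun _ => c); split; first exact: st_const.
  split => //; split.
  - exact: meas_wrt_cst.
  - rewrite pE; exact: finite_measure_integrable_cst.
  - exact: finite_measure_integrable_cst.
  - by move=> A _; rewrite pE.
by move=> N [mN PN0 HN]; exists N; split => // x /= hx; apply: HN => /=; rewrite lee_fin in hx.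
Qed.
Lemma h_measT s : measurable_fun setT (h s.+1).
Proof. exact: (@meas_wrt_T s _ (hmeas s)). Qed.

Lemma h_int s : P.-integrable setT (EFin \o h s.+1).
Proof.
pose S x := (\sum_(0 <= u <oo) (beta ^+ u * h u.+1 x)%:E)%E.
have b0 : 0 < beta by case/andP: hb.
have S0 x : (0 <= S x)%E.
  by apply: nneseries_ge0 => n _ _; rewrite lee_fin mulr_ge0 // ?exprn_ge0 ?ltW.
have mS : measurable_fun setT S.
  apply: (@ge0_emeasurable_sum _ _ _ setT (fun k x => (beta ^+ k * h k.+1 x)%:E) predT).
  - by move=> k x _ _; rewrite lee_fin mulr_ge0 // ?exprn_ge0 ?ltW.
  - move=> k _; apply/measurable_EFinP; apply: measurable_funM.
      exact: measurable_cst.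
    exact: h_measT.
have iS : P.-integrable setT S.
  apply/integrableP; split => //.
  by under eq_integral do rewrite gee0_abs //.
apply: (le_integrable measurableT (g := fun x => ((beta ^+ s)^-1)%:E * S x)%E).
- by apply/measurable_EFinP; exact: h_measT.
- move=> x _ /=; apply: le_trans (lee_abs _).
  rewrite /= ger0_norm; last exact: ltW (hpos _ _).
  have bs : 0 < beta ^+ s by rewrite exprn_gt0.
  have : ((beta ^+ s * h s.+1 x)%:E <= S x)%E.
    apply: le_trans (nneseries_lim_ge s.+1 _).
      rewrite big_nat_recr //= lee_paddl //.
      by apply: sume_ge0 => n _; rewrite lee_fin mulr_ge0 // ?exprn_ge0 ?ltW.
    by move=> n _ _; rewrite lee_fin mulr_ge0 // ?exprn_ge0 ?ltW.
  move/(lee_wpmul2l (x := ((beta ^+ s)^-1)%:E)).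
  rewrite lee_fin invr_ge0 ltW // => /(_ isT).
  by rewrite -EFinM mulrA mulVf ?gt_eqF // mul1r.
- exact: integrableZl.
Qed.

Lemma V_ge_h s c : 0 <= c -> {ae P, forall x, h s.+1 x + beta * c <= V s c x}.
Proof.
move=> c0; have [_ H _] := hV s c c0.
have pE : payoff beta h s c (fun _ => Some s.+1) = EFin \o (fun x => h s.+1 x + beta * c).
  apply/funext => x; rewrite /payoff big_nat1 subnn expr0 mul1r subSnn expr1.
  by rewrite mulrC.
have := H (EFin \o (fun x => h s.+1 x + beta * c)).
case.
  exists (fun _ => Some s.+1), (fun x => h s.+1 x + beta * c); split.
    exact: st_const.
  have iZ : P.-integrable setT (EFin \o (fun x => h s.+1 x + beta * c)).
    rewrite (_ : _ \o _ = (EFin \o h s.+1) \+ (EFin \o cst (beta * c)%R))%E //.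
    apply: integrableD => //; [exact: h_int | exact: finite_measure_integrable_cst].
  split => //; split => //.
  - apply/(meas_wrtP (F s) (sF s)); apply: measurable_funD.
      by apply/(meas_wrtP (F s) (sF s)); exact: hmeas.
    exact: measurable_cst.
  - by rewrite pE.
  - by move=> A _; rewrite pE.
by move=> N [mN PN0 HN]; exists N; split => // x /= hx; apply: HN => /=; rewrite lee_fin in hx.
Qed.
Lemma st_meas t tau n : stopping_time_from F t tau ->
  measurable [set x | tau x = Some n].
Proof.
move=> [_ hle].
pose Le k := [set x | exists k', tau x = Some k' /\ (k' <= k)%N].
have mLe k : measurable (Le k) by apply: (Fm k); exact: hle.
case: n => [|n].
  rewrite (_ : [set x | _] = Le 0%N) //; apply/seteqP; split => x /=.
    by move=> hx; exists 0%N.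
  by move=> [k' [hx]]; rewrite leqn0 hx => /eqP ->.
rewrite (_ : [set x | _] = Le n.+1 `\` Le n); first exact: measurableD.
apply/seteqP; split => x /=.
  move=> hx; split; first by exists n.+1.
  by move=> [k' [hk]]; rewrite hx in hk; case: hk => <-; rewrite ltnn.
move=> [[k' [hx kn]] H]; rewrite hx; congr Some; apply/eqP; rewrite eqn_leq kn /=.
by rewrite ltnNge; apply/negP => kn'; apply: H; exists k'.
Qed.

Lemma V_lip s q q' : 0 <= q -> q <= q' ->
  {ae P, forall x, V s q' x <= V s q x + (q' - q)}.
Proof.
move=> q0 qq'; have q'0 : 0 <= q' := le_trans q0 qq'.
have [_ Hq _] := hV s q q0.
have [_ _ Hmin] := hV s q' q'0.
set c := q' - q.
have c0 : 0 <= c by rewrite subr_ge0.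
have [b0 b1] : 0 < beta /\ beta < 1 by apply/andP.
have bk k : 0 <= beta ^+ k <= 1 by apply/andP; split; [apply: exprn_ge0; exact: ltW | apply: exprn_ile1; exact: ltW].
have mZ : measurable_fun setT (EFin \o (fun x => V s q x + c)).
  apply/measurable_EFinP; apply: measurable_funD; last exact: measurable_cst.
  exact: (@meas_wrt_T s _ (V_measT s q q0)).
suff : {ae P, forall x, ((EFin \o V s q') x <= (EFin \o (fun x => (V s q x + c)%R)) x)%E}.
  by apply: ae_mono => x /=; rewrite lee_fin.
apply: Hmin => //.
move=> Y [tau [Z' [st [ce ->]]]].
have [mZ' ip' iZ' eZ'] := ce.
pose g (o : option nat) := match o with Some n => (c * beta ^+ (n - s))%:E | None => 0%E end.
pose W x := g (tau x).
have mW : measurable_fun setT W := @meas_opt _ _ _ tau g (fun n => st_meas s tau n st).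
have pE : payoff beta h s q tau = (payoff beta h s q' tau \- W)%E.
  apply/funext => x; rewrite /payoff /W /g; case: (tau x) => [n|]; last by rewrite sube0.
  by rewrite -EFinB /c; congr EFin; ring.
have iW : P.-integrable setT W.
  apply: (le_integrable measurableT (g := EFin \o cst c)) => //.
    move=> x _; rewrite /W /g; case: (tau x) => [n|] /=.
      rewrite lee_fin !ger0_norm ?mulr_ge0 //; last by case/andP: (bk (n - s)%N).
      by rewrite ler_piMr //; case/andP: (bk (n - s)%N).
    by rewrite /= normr0 lee_fin normr_ge0.
  exact: finite_measure_integrable_cst.
have ip : P.-integrable setT (payoff beta h s q tau) by rewrite pE; exact: integrableB.
have [W' ceW] := condexp_exists P (F s) (sF s) (Fm s) _ ip.
have [mW' _ iW' eW'] := ceW.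
have leW' : {ae P, forall x, W' x <= V s q x}.
  apply: ae_mono (Hq (EFin \o W') _) => [x /=|]; first by rewrite lee_fin.
  by exists tau, W'.
have leZ : {ae P, forall x, Z' x <= W' x + c}.
  have iWc : P.-integrable setT (EFin \o (fun x => W' x + c)).
    rewrite (_ : _ \o _ = (EFin \o W') \+ (EFin \o cst c))%E //.
    by apply: integrableD => //; exact: finite_measure_integrable_cst.
  apply: (condexp_le P (F s) (sF s) (Fm s)) => //.
    apply/(meas_wrtP (F s) (sF s)); apply: measurable_funD; last exact: measurable_cst.
    by apply/(meas_wrtP (F s) (sF s)).
  move=> A GA; have mA := Fm s A GA.
  rewrite eZ' //.
  have ipc : P.-integrable A (fun x => payoff beta h s q tau x + c%:E)%E.
    apply: integrableD => //; first exact: integrableS ip.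
    exact: finite_measure_integrable_cst.
  apply: (@le_trans _ _ (\int[P]_(x in A) (payoff beta h s q tau x + c%:E))%E).
    apply: le_integral => //; first exact: integrableS ip'.
    move=> x _; rewrite /payoff; case: (tau x) => [n|].
      rewrite -EFinD lee_fin; have := bk (n - s)%N; move=> /andP[bn0 bn1].
      rewrite /c; nra.
    exact: lee_paddr.
  rewrite integralD //; [|exact: integrableS ip|exact: finite_measure_integrable_cst].
  rewrite -eW' //.
  rewrite (_ : (\int[P]_(x in A) (W' x + c)%:E = \int[P]_(x in A) ((W' x)%:E + (cst c x)%:E))%E); last first.
    by apply: eq_integral => x _; rewrite EFinD.
  rewrite integralD //; [exact: integrableS iW'|exact: finite_measure_integrable_cst].
apply: ae_mono (ae_and leZ leW') => x /= [h1 h2]; rewrite lee_fin; lra.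
Qed.
Lemma ext_h s : {ae P, forall x, forall y, 0 <= y -> h s.+1 x + beta * y <= V s y x}.
Proof.
have [b0 b1] : 0 < beta /\ beta < 1 by apply/andP.
have A2 : {ae P, forall x, forall r : rat, 0 <= (ratr r : R) ->
    h s.+1 x + beta * ratr r <= V s (ratr r) x}.
  apply: (ae_rat (Q := fun (r : rat) x => 0 <= (ratr r : R) ->
    h s.+1 x + beta * ratr r <= V s (ratr r) x)) => r.
  apply: (ae_impl (Q := fun x => h s.+1 x + beta * ratr r <= V s (ratr r) x)) => r0.
  exact: V_ge_h.
apply: ae_mono (ae_and (hcont s) A2) => x [cx A] y y0.
rewrite leNgt; apply/negP => lt.
have [r [yr hr]] := L_dn _ _ _ _ _ cx y0 (ltW b0) lt.
have r0 : 0 <= ratr r :> R by rewrite (le_trans y0) // ltW.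
have := A r r0; lra.
Qed.

Definition Xr s (r : rat) (x : T) : R :=
  if (0 < (ratr r : R)) && (ratr r < V s (ratr r) x) then ratr r else h s.+1 x.

Lemma Xr_member s r : [/\ meas_wrt (F s) (Xr s r), (forall x, 0 < Xr s r x) &
  {ae P, forall x, Xr s r x < V s (Xr s r x) x}].
Proof.
have [b0 b1] : 0 < beta /\ beta < 1 by apply/andP.
split.
- apply/(meas_wrtP (F s) (sF s)); rewrite /Xr.
  have mh : measurable_fun setT (h s.+1 : GT (F s) -> R).
    by apply/(meas_wrtP (F s) (sF s)).
  case: (ltP 0 (ratr r)) => r0 /=; last exact: mh.
  apply: measurable_fun_ifT; [|exact: measurable_cst|exact: mh].
  apply: measurable_fun_ltr; first exact: measurable_cst.
  by apply/(meas_wrtP (F s) (sF s)); apply: V_measT; exact: ltW.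
- by move=> x; rewrite /Xr; case: ifP => [/andP[]//|_]; exact: hpos.
- apply: ae_mono (ext_h s) => x H; rewrite /Xr; case: ifP => [/andP[]//|_].
  have h0 := hpos s.+1 x.
  have := H (h s.+1 x) (ltW h0).
  have : 0 < beta * h s.+1 x by rewrite mulr_gt0.
  lra.
Qed.

Lemma fwd s m : 0 <= m -> {ae P, forall x, m < V s m x -> (m%:E < M s x)%E}.
Proof.
move=> m0.
have [_ Hmem _] := hM s.
have A : {ae P, forall x, forall r, ((Xr s r x)%:E <= M s x)%E}.
  apply: (ae_rat (Q := fun r x => ((Xr s r x)%:E <= M s x)%E)) => r.
  have [m1 m2 m3] := Xr_member s r.
  apply: ae_mono (Hmem (EFin \o Xr s r) _) => //.
  by exists (Xr s r).
apply: ae_mono (ae_and (hcont s) A) => x [cx Ax] mV.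
have [r [mr hr]] := L_up _ _ _ cx m0 mV.
have r0 : 0 < ratr r :> R by rewrite (le_lt_trans m0).
have := Ax r; rewrite /Xr r0 hr /=.
by apply: lt_le_trans; rewrite lte_fin.
Qed.
Lemma bwd s m : 0 <= m -> {ae P, forall x, (m%:E < M s x)%E -> m < V s m x}.
Proof.
move=> m0.
have [_ _ Hmin] := hM s.
pose Z x := if V s m x == m then m%:E else +oo%E.
have mZ : measurable_fun setT Z.
  apply: measurable_fun_ifT; [|exact: measurable_cst|exact: measurable_cst].
  apply: measurable_fun_eqr; last exact: measurable_cst.
  exact: (@meas_wrt_T s _ (V_measT s m m0)).
have Lip : {ae P, forall x, forall r : rat, m <= (ratr r : R) ->
    V s (ratr r) x <= V s m x + (ratr r - m)}.
  apply: (ae_rat (Q := fun (r : rat) x => m <= (ratr r : R) ->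
    V s (ratr r) x <= V s m x + (ratr r - m))) => r.
  apply: (ae_impl (Q := fun x => V s (ratr r) x <= V s m x + (ratr r - m))) => mr.
  exact: V_lip.
have HZ : {ae P, forall x, (M s x <= Z x)%E}.
  apply: Hmin => // Y [X [mX pX aX ->]].
  apply: ae_mono (ae_and (ae_and (hcont s) Lip) aX) => x [[cx Lx] ax].
  rewrite /Z; case: eqP => [Vm|_]; last by rewrite leey.
  rewrite /= lee_fin leNgt; apply/negP => mX'.
  have [r [yr hr]] := L_up _ _ _ cx (ltW (pX x)) ax.
  have := Lx r (le_trans (ltW mX') (ltW yr)).
  rewrite Vm; lra.
apply: ae_mono (ae_and HZ (V_ge s m m0)) => x [hz vg] mM.
rewrite lt_neqAle vg andbT; apply/eqP => Vm.
move: hz; rewrite /Z -Vm eqxx => hz.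
by move: mM; rewrite ltNge hz.
Qed.

Lemma main_sec (m : R) (t theta : nat) : 0 <= m -> (t <= theta)%N ->
  {ae P, forall x,
     (((theta%:R : R)%:E < sigma_time V t m x)%E <->
        (forall s, (t <= s <= theta)%N -> m < V s m x)) /\
     ((forall s, (t <= s <= theta)%N -> m < V s m x) <->
        (m%:E < Mmin M t theta x)%E)}.
Proof.
move=> m0 tth.
have H : {ae P, forall x, forall s, (m <= V s m x /\
   (m < V s m x -> (m%:E < M s x)%E)) /\ ((m%:E < M s x)%E -> m < V s m x)}.
  apply: ae_foralln => s.
  exact: ae_and (ae_and (V_ge s m m0) (fwd s m m0)) (bwd s m m0).
apply: ae_mono H => x Hx; split; split.
- move=> hs s /andP[ts sth]; have [[ge _] _] := Hx s.
  rewrite lt_neqAle ge andbT; apply/eqP => e.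
  have : (sigma_time V t m x <= (s%:R : R)%:E)%E.
    by apply: ereal_inf_lbound; exists s.
  move=> /(lt_le_trans hs); rewrite lte_fin ltr_nat ltnNge sth.
  by [].
- move=> hV'; apply: (@lt_le_trans _ _ ((theta.+1%:R : R)%:E)).
    by rewrite lte_fin ltr_nat.
  apply: le_ereal_inf_tmp => y [n [tn Vn] <-].
  rewrite lee_fin ler_nat ltnNge; apply/negP => nth.
  by have := hV' n; rewrite tn nth Vn ltxx => /(_ isT).
- move=> hV'; rewrite /Mmin big_nat_cond.
  apply: lt_bigmin; first exact: ltey.
  move=> i /andP[/andP[ti ith] _]; have [[_ fw] _] := Hx i.
  by apply: fw; apply: hV'; rewrite ti -ltnS ith.
- move=> hM' s /andP[ts sth]; have [_ bw] := Hx s.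
  apply: bw; apply: (lt_le_trans hM'); rewrite /Mmin.
  by apply: ge_bigmin_seq => //; rewrite mem_index_iota ts ltnS.
Qed.
End Main.

Theorem lemma3p3 (d : measure_display) (T : measurableType d) (R : realType)
  (P : probability T R) (F : nat -> set (set T)) (beta : R)
  (h : nat -> T -> R) (V : nat -> R -> T -> R) (M : nat -> T -> \bar R) :
  (forall A, P.-negligible A -> measurable A) ->
  filtration F ->
  0 < beta < 1 ->
  (forall n x, 0 < h n x) ->
  (forall n, meas_wrt (F n) (h n.+1)) ->
  (\int[P]_x (\sum_(0 <= u <oo) (beta ^+ u * h u.+1 x)%:E) < +oo)%E ->
  is_value_fun P F beta h V ->
  (forall t, {ae P, forall x,
     {within [set m : R | 0 <= m], continuous (fun m => V t m x)}}) ->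
  is_gittins_index P F V M ->
  forall (m : R) (t theta : nat), 0 <= m -> (t <= theta)%N ->
  {ae P, forall x,
     (((theta%:R : R)%:E < sigma_time V t m x)%E <->
        (forall s, (t <= s <= theta)%N -> m < V s m x)) /\
     ((forall s, (t <= s <= theta)%N -> m < V s m x) <->
        (m%:E < Mmin M t theta x)%E)}.

Proof.
move=> _ hF hb hpos hmeas hint hV hcont hM m t theta m0 tth.
by apply: (@main_sec d T R P F beta h V M) => //.
Qed.
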